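(* Let $A$ be a commutative $\mathbb F_p$-algebra, $B=A[z_1,\ldots,z_n]$, $a_1,\ldots,a_n\in A$ a regular sequence in $A$, $\mathfrak a=Aa_1+\cdots+Aa_n$, and $\mathcal D:B^n\to B$ the $A$-linear map $\mathcal D(h_1,\ldots,h_n)=\sum_{i=1}^n(\partial_{z_i}h_i-a_ih_i)$. Let $f=\sum_r c_rz^r\in B$ with $c_r\in A$ (where $z^r=z_1^{r_1}\cdots z_n^{r_n}$). If $f^p\in\mathrm{Im}\,\mathcal D$, then $c_r^p\in\mathfrak a$ for all $r$.
   Context: $\partial_{z_i}$ denotes the formal partial derivative with respect to $z_i$ on $B$. *)

(* Defs.v *)
(* Polynomials in n variables over a commutative ring A are
   represented by their coefficient functions on multi-indices
   r : {ffun 'I_n -> nat} (r i = exponent of z_i), required to be finitely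
   supported. *)
From HB Require Import structures.
From mathcomp Require Import all_boot all_order all_algebra.
Set Implicit Arguments. Unset Strict Implicit. Unset Printing Implicit Defensive.
Import Order.TTheory GRing.Theory Num.Theory.
Local Open Scope ring_scope.

Definition mindex (n : nat) := {ffun 'I_n -> nat}.

Definition coefs (A : comPzRingType) (n : nat) := mindex n -> A.

Definition finsupp (A : comPzRingType) (n : nat) (c : coefs A n) : Prop :=
  exists N : nat, forall r : mindex n, (exists i, (N <= r i)%N) -> c r = 0.

Definition mmax (n : nat) (r : mindex n) : nat := \max_(i < n) r i.

Definition cmul (A : comPzRingType) (n : nat) (f g : coefs A n) : coefs A n :=
  fun r => \sum_(s : {ffun 'I_n -> 'I_(mmax r).+1} | [forall i, (s i <= r i)%N])
             f [ffun i => (s i : nat)] * g [ffun i => (r i - s i)%N].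

Definition cone (A : comPzRingType) (n : nat) : coefs A n :=
  fun r => if [forall i, r i == 0%N] then 1 else 0.

Definition cpow (A : comPzRingType) (n : nat) (f : coefs A n) (k : nat) : coefs A n :=
  iter k (cmul f) (@cone A n).

Definition cderiv (A : comPzRingType) (n : nat) (i : 'I_n) (h : coefs A n) : coefs A n :=
  fun r => (r i).+1%:R * h [ffun j => (r j + (j == i))%N].

Definition Dmap (A : comPzRingType) (n : nat) (a : 'I_n -> A) (h : 'I_n -> coefs A n)
  : coefs A n :=
  fun r => \sum_(i < n) (cderiv i (h i) r - a i * h i r).

Definition in_ideal_prefix (A : comPzRingType) (n : nat) (a : 'I_n -> A) (k : nat) (x : A)
  : Prop :=
  exists u : 'I_n -> A, x = \sum_(i < n | (i < k)%N) u i * a i.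

Definition in_ideal (A : comPzRingType) (n : nat) (a : 'I_n -> A) (x : A) : Prop :=
  in_ideal_prefix a n x.

Definition regular_seq (A : comPzRingType) (n : nat) (a : 'I_n -> A) : Prop :=
  (forall (i : 'I_n) (x : A), in_ideal_prefix a i (x * a i) -> in_ideal_prefix a i x)
  /\ ~ in_ideal a 1.

(* Main.v *)
Require Import Defs.
From Stdlib Require Import FunctionalExtensionality PropExtensionality ClassicalEpsilon.
From HB Require Import structures.
From mathcomp Require Import all_boot all_order all_algebra.
Set Implicit Arguments. Unset Strict Implicit. Unset Printing Implicit Defensive.
Import GRing.Theory.
Local Open Scope ring_scope.

Section Ideals.
Variable A : comPzRingType.
Implicit Types (K : A -> Prop) (b c x y : A) (l t : seq A).

Definition ideal K := K 0 /\ (forall x y, K x -> K y -> K (x + y)) /\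
  (forall c x, K x -> K (c * x)).
Definition addI K b : A -> Prop := fun x => exists k c, K k /\ x = k + c * b.
Definition span K l := foldl addI K l.
Definition nzd K b := forall x, K (b * x) -> K x.
Fixpoint reg K l := if l is b :: l' then nzd K b /\ reg (addI K b) l' else True.

Lemma pred_ext (K K' : A -> Prop) : (forall x, K x <-> K' x) -> K = K'.
Proof.
move=> h; apply: functional_extensionality => x.
exact: propositional_extensionality.
Qed.

Lemma idealN K x : ideal K -> K x -> K (- x).
Proof. by move=> [_ [_ hM]] hx; rewrite -mulN1r; apply: hM. Qed.

Lemma idealD K x y : ideal K -> K x -> K y -> K (x + y).
Proof. by move=> [_ [hD _]]; apply: hD. Qed.

Lemma idealB K x y : ideal K -> K x -> K y -> K (x - y).
Proof. by move=> hK hx hy; apply: idealD => //; apply: idealN. Qed.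

Lemma idealM K c x : ideal K -> K x -> K (c * x).
Proof. by move=> [_ [_ hM]]; apply: hM. Qed.

Lemma ideal0 K : ideal K -> K 0.
Proof. by case. Qed.

Lemma ideal_addI K b : ideal K -> ideal (addI K b).
Proof.
move=> hK; split; first by exists 0, 0; rewrite mul0r addr0; split => //; apply: ideal0.
split.
- move=> x y [k [c [hk ->]]] [k' [c' [hk' ->]]]; exists (k + k'), (c + c').
  by split; [apply: idealD | rewrite mulrDl addrACA].
- move=> d x [k [c [hk ->]]]; exists (d * k), (d * c).
  by split; [apply: idealM | rewrite mulrDr mulrA].
Qed.

Lemma addI_sub K b x : ideal K -> K x -> addI K b x.
Proof. by move=> hK hx; exists x, 0; rewrite mul0r addr0. Qed.

Lemma addIC K b c : addI (addI K b) c = addI (addI K c) b.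
Proof.
apply: pred_ext => x; split.
- move=> [k [d [[k' [e [hk' ->]]] ->]]]; exists (k' + d * c), e.
  by split; [exists k', d | rewrite addrAC].
- move=> [k [d [[k' [e [hk' ->]]] ->]]]; exists (k' + d * b), e.
  by split; [exists k', d | rewrite addrAC].
Qed.

Lemma span_ideal K l : ideal K -> ideal (span K l).
Proof. by elim: l K => //= b l IH K hK; apply: IH; apply: ideal_addI. Qed.

Lemma span_sub K l x : ideal K -> K x -> span K l x.
Proof.
elim: l K => //= b l IH K hK hx; apply: IH; first exact: ideal_addI.
exact: addI_sub.
Qed.

Lemma span_addI K l c : span (addI K c) l = addI (span K l) c.
Proof. by elim: l K => [|d l IH] K //=; rewrite addIC IH. Qed.

Lemma span_rcons K l c : span K (rcons l c) = addI (span K l) c.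
Proof. by rewrite /span foldl_rcons. Qed.

Lemma reg_rcons K l c : reg K (rcons l c) <-> reg K l /\ nzd (span K l) c.
Proof.
elim: l K => [|b l IH] K /=; first by split; [case | case].
rewrite IH; tauto.
Qed.

Lemma nzdX K b k : nzd K b -> nzd K (b ^+ k).
Proof.
move=> hb; elim: k => [|k IH] x; first by rewrite expr0 mul1r.
by rewrite exprS -mulrA => /hb /IH.
Qed.

Lemma reg_swap K b t : ideal K -> reg K (b :: t) -> nzd (span K t) b.
Proof.
move=> hK; elim/last_ind: t => [|t c IH]; first by case.
rewrite -rcons_cons => /reg_rcons [hbt hc] x.
rewrite span_rcons => -[y [v [hy hxe]]].
have hsp := span_ideal t hK.
have : span K (b :: t) (c * v).
  rewrite /= span_addI; exists (- y), x; split; first exact: idealN.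
  by rewrite mulrC [x * b]mulrC hxe addKr.
move/hc; rewrite /= span_addI => -[y' [z [hy' hv]]].
have : span K t (b * (x - z * c)).
  have -> : b * (x - z * c) = y + c * y'.
    rewrite mulrBr hxe hv mulrDl.
    have -> : b * (z * c) = z * b * c by rewrite mulrA [b * z]mulrC.
    by rewrite -addrA addrK mulrC.
  by apply: idealD => //; apply: idealM.
move/(IH hbt) => h; exists (x - z * c), z; split => //.
by rewrite subrK.
Qed.


Lemma regM K b t e : ideal K -> reg K (b :: t) -> reg (addI K (b ^+ e.+1)) t.
Proof.
move=> hK; elim/last_ind: t => [|t c IH] // hreg.
move: (hreg); rewrite -rcons_cons => /reg_rcons [hbt hc].
apply/reg_rcons; split; first exact: IH.
have hsp := span_ideal t hK.
have hb := reg_swap hK hbt.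
rewrite span_addI.
move: hc; rewrite /= span_addI => hc.
clear IH; elim: e => [|e IHe]; first by rewrite expr1.
move=> x [y [w [hy hxe]]].
have : addI (span K t) (b ^+ e.+1) (c * x).
  by exists y, (w * b); split => //; rewrite hxe [b ^+ e.+2]exprS mulrA.
move/IHe => [y1 [z [hy1 hx]]].
have : span K t (b ^+ e.+1 * (c * z - w * b)).
  have -> : b ^+ e.+1 * (c * z - w * b) = y - c * y1.
    have hy' : y = c * x - w * b ^+ e.+2 by rewrite hxe addrK.
    rewrite hy' hx [c * (_ + _)]mulrDr addrAC [c * y1 + _]addrC addrK mulrBr.
    rewrite [b ^+ e.+2]exprSr mulrCA [b ^+ e.+1 * z]mulrC mulrCA.
    by rewrite [b ^+ e.+1 * (w * b)]mulrCA.
  by apply: idealB => //; apply: idealM.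
move/(nzdX (k:=e.+1) hb) => h.
have : addI (span K t) b (c * z) by exists (c * z - w * b), w; rewrite subrK.
move/hc => [y2 [v [hy2 hz]]].
exists (y1 + y2 * b ^+ e.+1), v; split.
  by apply: idealD => //; rewrite mulrC; apply: idealM.
by rewrite hx hz mulrDl -addrA -mulrA -exprS.
Qed.

Lemma reg_pow K l e : ideal K -> reg K l -> reg K (map (fun x => x ^+ e.+1) l).
Proof.
elim: l K => //= c l IH K hK [hc hl]; split; first exact: nzdX.
apply: (regM e hK); split => //.
by apply: IH => //; apply: ideal_addI.
Qed.

Definition Qp (p : nat) l := \prod_(y <- l) y ^+ p.

Lemma colon K l p : ideal K -> reg K l -> forall x,
  span K (map (fun y => y ^+ p.+1) l) (x * Qp p l) -> span K l x.
Proof.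
elim: l K => [|b l IH] K hK /=; first by move=> _ x; rewrite /Qp big_nil mulr1.
move=> [hb hl].
have hKb := ideal_addI b hK.
have hsp := span_ideal (map (fun y => y ^+ p.+1) l) hK.
have hnz : nzd (span K (map (fun y => y ^+ p.+1) l)) b.
  by apply: reg_swap => //; split => //; apply: reg_pow.
suff: forall e x, span K (b ^+ e.+1 :: map (fun y => y ^+ p.+1) l)
    (x * b ^+ e * Qp p l) -> span (addI K b) l x.
  by move=> H x; rewrite /Qp big_cons mulrA => /H.
elim=> [|e IHe] x /=.
  by rewrite expr1 expr0 mulr1 => /(IH _ hKb hl).
rewrite span_addI => -[y [w [hy hxe]]].
apply: IHe => /=; rewrite span_addI.
exists (x * b ^+ e * Qp p l - w * b ^+ e.+1), w; split; last by rewrite subrK.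
apply: hnz; rewrite mulrBr.
have -> : b * (x * b ^+ e * Qp p l) = y + w * b ^+ e.+2.
  by rewrite -hxe exprS !mulrA [b * x]mulrC.
by rewrite [b ^+ e.+2]exprS mulrCA addrK.
Qed.


Definition K0 : A -> Prop := fun x => x = 0.

Lemma ideal_K0 : ideal K0.
Proof.
split; first by [].
split; first by move=> x y -> ->; rewrite addr0.
by move=> c x ->; rewrite mulr0.
Qed.

Lemma span0P (T : eqType) (b : T -> A) (l : seq T) x : uniq l ->
  span K0 (map b l) x <-> exists u : T -> A, x = \sum_(i <- l) u i * b i.
Proof.
elim/last_ind: l x => [|l i IH] x.
  by move=> _; split; [move=> ->; exists (fun=> 0); rewrite big_nil | case=> u; rewrite big_nil].
rewrite rcons_uniq => /andP [hi hl].
rewrite map_rcons span_rcons; split.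
- move=> [y [c [/IH [] // u -> ->]]].
  exists (fun j => if j == i then c else u j); rewrite big_rcons eqxx /=.
  congr (_ + _); apply: eq_big_seq => j hj.
  by case: eqP => // hji; move: hi; rewrite -hji hj.
- move=> [u ->]; rewrite big_rcons /=.
  by exists (\sum_(j <- l) u j * b j), (u i); split => //; apply/IH => //; exists u.
Qed.

Lemma reg_nth K l : (forall j, (j < size l)%N -> nzd (span K (take j l)) (nth 0 l j)) ->
  reg K l.
Proof.
move=> h; suff: forall j, (j <= size l)%N -> reg K (take j l).
  by move/(_ (size l) (leqnn _)); rewrite take_size.
elim=> [|j IH] hj; first by rewrite take0.
rewrite (take_nth 0 hj); apply/reg_rcons; split; first by apply: IH; apply: ltnW.
exact: h.
Qed.

End Ideals.

Section Translate.
Variables (A : comPzRingType) (n : nat) (a : 'I_n -> A).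

Lemma take_enum j : (j <= n)%N ->
  take j (enum 'I_n) = [seq i <- enum 'I_n | (val i < j)%N].
Proof.
move=> hj; apply: (inj_map val_inj).
rewrite map_take val_enum_ord take_iota (minn_idPl hj).
by rewrite -(filter_iota_ltn 0 hj) -val_enum_ord filter_map.
Qed.

Lemma prefix_span j x : (j <= n)%N ->
  in_ideal_prefix a j x <-> span (@K0 A) (take j (map a (enum 'I_n))) x.
Proof.
move=> hj; rewrite -map_take span0P ?take_uniq ?enum_uniq // take_enum //.
rewrite /in_ideal_prefix; split=> -[u ->]; exists u; by rewrite big_filter big_enum_cond.
Qed.

Lemma reg_of_regular : regular_seq a -> reg (@K0 A) (map a (enum 'I_n)).
Proof.
move=> [hr _]; apply: reg_nth => j; rewrite size_map size_enum_ord => hj.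
have hi : nth (Ordinal hj) (enum 'I_n) j = Ordinal hj.
  by apply: val_inj; rewrite /= nth_enum_ord.
rewrite (nth_map (Ordinal hj)) ?size_enum_ord // hi => x.
rewrite -!prefix_span ?(ltnW hj) //.
by rewrite mulrC; exact: (hr (Ordinal hj)).
Qed.

End Translate.

Section Conv.
Variables (A : comPzRingType) (n : nat).

Definition B (K : nat) := {ffun 'I_n -> 'I_K.+1}.
Definition toN K (s : B K) : mindex n := [ffun i => (s i : nat)].
Definition ofN K (m : mindex n) : B K := [ffun i => inord (m i)].
Definition addm (u v : mindex n) : mindex n := [ffun i => (u i + v i)%N].
Definition subm (u v : mindex n) : mindex n := [ffun i => (u i - v i)%N].
Definition bnd K (m : mindex n) := [forall i, (m i <= K)%N].
Definition lem (u v : mindex n) := [forall i, (u i <= v i)%N].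

Lemma toN_inj K : injective (@toN K).
Proof.
move=> s t /ffunP h; apply/ffunP => i; apply: val_inj.
by have := h i; rewrite !ffunE.
Qed.

Lemma toN_bnd K (s : B K) : bnd K (toN s).
Proof. by apply/forallP => i; rewrite ffunE -ltnS ltn_ord. Qed.

Lemma toN_ofN K m : bnd K m -> toN (ofN K m) = m.
Proof.
move=> /forallP h; apply/ffunP => i; rewrite !ffunE inordK //.
by rewrite ltnS h.
Qed.

Lemma delta K (m : mindex n) (G : mindex n -> A) :
  \sum_(s : B K | toN s == m) G (toN s) = if bnd K m then G m else 0.
Proof.
case: ifP => hb.
  rewrite (big_pred1 (ofN K m)) ?toN_ofN // => s /=.
  apply/eqP/eqP => [hs|->]; last exact: toN_ofN.
  by apply: toN_inj; rewrite toN_ofN.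
rewrite big1 // => s /eqP hs.
by move: (toN_bnd s); rewrite hs hb.
Qed.

Lemma transfer K1 K2 (P : pred (mindex n)) (F : mindex n -> A) :
  (forall m, P m -> bnd K1 m && bnd K2 m) ->
  \sum_(s : B K1 | P (toN s)) F (toN s) = \sum_(t : B K2 | P (toN t)) F (toN t).
Proof.
move=> hP.
transitivity (\sum_(s : B K1 | P (toN s))
                \sum_(t : B K2 | toN t == toN s) F (toN t)).
  apply: eq_bigr => s hs; rewrite delta.
  by case/andP: (hP _ hs) => _ ->.
rewrite (exchange_big_dep (fun t : B K2 => P (toN t))) /=; last first.
  by move=> s t hs /eqP ->.
apply: eq_bigr => t ht.
transitivity (\sum_(s : B K1 | toN s == toN t) F (toN s)).
  apply: eq_big => s; last by move=> /andP [_ /eqP ->].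
  apply/andP/eqP => [[_ /eqP ->] // | e]; split; last by rewrite e.
  by rewrite e.
by rewrite delta; case/andP: (hP _ ht) => ->.
Qed.

Lemma bnd_mmax (m : mindex n) : bnd (mmax m) m.
Proof. apply/forallP => i; rewrite /mmax; exact: (@leq_bigmax _ (fun j => m j) i). Qed.

Lemma cmulE K (f g : coefs A n) r : bnd K r ->
  cmul f g r = \sum_(s : B K) \sum_(t : B K | addm (toN s) (toN t) == r)
                 f (toN s) * g (toN t).
Proof.
move=> hr.
transitivity (\sum_(s : B K | lem (toN s) r) f (toN s) * g (subm r (toN s))).
  rewrite /cmul.
  transitivity (\sum_(s : B (mmax r) | lem (toN s) r)
                  f (toN s) * g (subm r (toN s))).
    apply: eq_big => s.
      by apply: eq_forallb => i; rewrite ffunE.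
    move=> _; congr (_ * g _); apply/ffunP => i; rewrite !ffunE //.
  apply: (@transfer (mmax r) K (fun m => lem m r) (fun m => f m * g (subm r m))) => m hm.
  apply/andP; split; apply/forallP => i; apply: leq_trans (forallP hm i) _;
    [ exact: (forallP (bnd_mmax r) i) | exact: (forallP hr i)].
rewrite big_mkcond; apply: eq_bigr => s _.
have e : forall t : B K, (addm (toN s) (toN t) == r) =
    lem (toN s) r && (toN t == subm r (toN s)).
  move=> t; apply/eqP/andP => [h | [/forallP hl /eqP ht]].
    split; first by apply/forallP => i; rewrite -h !ffunE leq_addr.
    by apply/eqP/ffunP => i; rewrite -h !ffunE addKn.
  by apply/ffunP => i; rewrite ht !ffunE subnKC // -(ffunE (fun i => (s i : nat))) hl.
case: (boolP (lem (toN s) r)) => hl.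
  under eq_bigl => t do rewrite e hl /=.
  rewrite (@delta K (subm r (toN s)) (fun m => f (toN s) * g m)).
  case: ifP => // /negP []; apply/forallP => i.
  rewrite ffunE; apply: leq_trans (leq_subr _ _) _.
  by move/forallP: hr; apply.
by rewrite big_pred0 // => t; rewrite e (negbTE hl).
Qed.


Lemma cmulE' K (f g : coefs A n) r : bnd K r ->
  cmul f g r = \sum_(s : B K) \sum_(t : B K)
    (if addm (toN s) (toN t) == r then f (toN s) * g (toN t) else 0).
Proof.
by move=> hr; rewrite (cmulE _ _ hr); apply: eq_bigr => s _; rewrite big_mkcond.
Qed.

Lemma sum_delta K (m : mindex n) (G : mindex n -> A) :
  (~~ bnd K m -> G m = 0) ->
  \sum_(s : B K) (if toN s == m then G (toN s) else 0) = G m.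
Proof.
by move=> h; rewrite -big_mkcond delta; case: ifP => // hb; rewrite h // hb.
Qed.

Lemma addmC u v : addm u v = addm v u.
Proof. by apply/ffunP => i; rewrite !ffunE addnC. Qed.

Lemma addmA u v w : addm u (addm v w) = addm (addm u v) w.
Proof. by apply/ffunP => i; rewrite !ffunE addnA. Qed.

Lemma bnd_addr K u t r : addm u t = r -> bnd K r -> bnd K t.
Proof.
move=> <- /forallP h; apply/forallP => i; apply: leq_trans (h i).
by rewrite ffunE leq_addl.
Qed.

Lemma cmulC (f g : coefs A n) r : cmul f g r = cmul g f r.
Proof.
rewrite !(cmulE' _ _ (bnd_mmax r)) exchange_big.
by apply: eq_bigr => t _; apply: eq_bigr => s _; rewrite addmC mulrC.
Qed.

Lemma cmulDl (f g h : coefs A n) r :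
  cmul (fun m => f m + g m) h r = cmul f h r + cmul g h r.
Proof. by rewrite /cmul -big_split; apply: eq_bigr => s _; rewrite mulrDl. Qed.

Lemma conv3 (f g h : coefs A n) r : cmul f (cmul g h) r =
  \sum_(u : B (mmax r)) \sum_(v : B (mmax r)) \sum_(w : B (mmax r))
   (if addm (toN u) (addm (toN v) (toN w)) == r
    then f (toN u) * (g (toN v) * h (toN w)) else 0).
Proof.
have hr := bnd_mmax r.
rewrite (cmulE' _ _ hr); apply: eq_bigr => u _.
transitivity (\sum_(t : B (mmax r)) \sum_(v : B (mmax r)) \sum_(w : B (mmax r))
  (if toN t == addm (toN v) (toN w) then
    (if addm (toN u) (toN t) == r then f (toN u) * (g (toN v) * h (toN w)) else 0)
   else 0)).
  apply: eq_bigr => t _; case: ifP => e.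
    rewrite (cmulE' _ _ (bnd_addr (eqP e) hr)) mulr_sumr; apply: eq_bigr => v _.
    rewrite mulr_sumr; apply: eq_bigr => w _.
    by rewrite eq_sym; case: ifP => _; rewrite ?mulr0.
  by rewrite big1 // => v _; rewrite big1 // => w _; case: ifP.
rewrite exchange_big; apply: eq_bigr => v _; rewrite exchange_big; apply: eq_bigr => w _.
rewrite (@sum_delta _ (addm (toN v) (toN w)) (fun m => if addm (toN u) m == r
   then f (toN u) * (g (toN v) * h (toN w)) else 0)) //.
by case: ifP => // /eqP e /negP []; apply: bnd_addr e hr.
Qed.

Lemma cmulA (f g h : coefs A n) r : cmul f (cmul g h) r = cmul (cmul f g) h r.
Proof.
rewrite [RHS]cmulC !conv3 [RHS]exchange_big; apply: eq_bigr => a _.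
rewrite exchange_big; apply: eq_bigr => b _; apply: eq_bigr => c _.
by rewrite [addm (toN b) _]addmC -addmA [h (toN b) * _]mulrC -mulrA.
Qed.


Definition zm : mindex n := [ffun => 0%N].

Lemma add0m u : addm zm u = u.
Proof. by apply/ffunP => i; rewrite !ffunE. Qed.

Lemma coneE (m : mindex n) : @cone A n m = if m == zm then 1 else 0.
Proof.
rewrite /cone; congr (if _ then _ else _); apply/forallP/eqP => [h|->].
  by apply/ffunP => i; rewrite ffunE; apply/eqP.
by move=> i; rewrite ffunE.
Qed.

Lemma bnd_zm K : bnd K zm.
Proof. by apply/forallP => i; rewrite ffunE. Qed.

Lemma cmul1 (f : coefs A n) r : cmul (@cone A n) f r = f r.
Proof.
rewrite (cmulE' _ _ (bnd_mmax r)).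
transitivity (\sum_(s : B (mmax r)) (if toN s == zm then
  \sum_(t : B (mmax r)) (if addm zm (toN t) == r then f (toN t) else 0) else 0)).
  apply: eq_bigr => s _; rewrite coneE; case: eqP => [->|_].
    by apply: eq_bigr => t _; rewrite mul1r.
  by apply: big1 => t _; rewrite mul0r if_same.
rewrite (@sum_delta _ zm (fun m => \sum_(t : B (mmax r))
   (if addm zm (toN t) == r then f (toN t) else 0))); last by rewrite bnd_zm.
under eq_bigr => t _ do rewrite add0m.
by rewrite (@sum_delta _ r f) // bnd_mmax.
Qed.

End Conv.

Section PSring.
Variables (A : comPzRingType) (n : nat).

Definition PS : Type := mindex n -> A.

Definition eqPS (f g : PS) : bool :=
  if excluded_middle_informative (f = g) then true else false.

Lemma eqPSP : Equality.axiom eqPS.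
Proof. by move=> f g; rewrite /eqPS; case: excluded_middle_informative => h; constructor. Qed.

HB.instance Definition _ := hasDecEq.Build PS eqPSP.

Definition findPS (P : pred PS) (k : nat) : option PS :=
  match excluded_middle_informative (exists x, P x) with
  | left h => Some (proj1_sig (constructive_indefinite_description _ h))
  | right _ => None
  end.

Lemma findPS_correct P k x : findPS P k = Some x -> P x.
Proof.
rewrite /findPS; case: excluded_middle_informative => // h [<-].
exact: proj2_sig (constructive_indefinite_description _ h).
Qed.

Lemma findPS_complete (P : pred PS) : (exists x, P x) -> exists k, findPS P k.
Proof. by move=> h; exists 0%N; rewrite /findPS; case: excluded_middle_informative. Qed.

Lemma findPS_ext (P Q : pred PS) : P =1 Q -> findPS P =1 findPS Q.
Proof.
move=> h; have -> : P = Q by apply: functional_extensionality.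
by [].
Qed.

HB.instance Definition _ := hasChoice.Build PS findPS_correct findPS_complete findPS_ext.

Definition zeroPS : PS := fun _ => 0.
Definition oppPS (f : PS) : PS := fun r => - f r.
Definition addPS (f g : PS) : PS := fun r => f r + g r.

Lemma addPSA : associative addPS.
Proof. by move=> f g h; apply: functional_extensionality => r; rewrite /addPS addrA. Qed.
Lemma addPSC : commutative addPS.
Proof. by move=> f g; apply: functional_extensionality => r; rewrite /addPS addrC. Qed.
Lemma add0PS : left_id zeroPS addPS.
Proof. by move=> f; apply: functional_extensionality => r; rewrite /addPS add0r. Qed.
Lemma addNPS : left_inverse zeroPS oppPS addPS.
Proof. by move=> f; apply: functional_extensionality => r; rewrite /addPS addNr. Qed.

HB.instance Definition _ := GRing.isZmodule.Build PS addPSA addPSC add0PS addNPS.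

Definition mulPS (f g : PS) : PS := cmul f g.
Definition onePS : PS := @cone A n.

Lemma mulPSA : associative mulPS.
Proof. by move=> f g h; apply: functional_extensionality => r; rewrite /mulPS cmulA. Qed.
Lemma mulPSC : commutative mulPS.
Proof. by move=> f g; apply: functional_extensionality => r; rewrite /mulPS cmulC. Qed.
Lemma mul1PS : left_id onePS mulPS.
Proof. by move=> f; apply: functional_extensionality => r; rewrite /mulPS cmul1. Qed.
Lemma mulPSDl : left_distributive mulPS +%R.
Proof. by move=> f g h; apply: functional_extensionality => r; rewrite /mulPS cmulDl. Qed.

HB.instance Definition _ := GRing.Zmodule_isComPzRing.Build PS mulPSA mulPSC mul1PS mulPSDl.

Lemma PS_addE (f g : PS) r : (f + g) r = f r + g r. Proof. by []. Qed.
Lemma PS_mulE (f g : PS) : f * g = cmul f g. Proof. by []. Qed.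
Lemma PS_oneE : (1 : PS) = @cone A n. Proof. by []. Qed.

End PSring.

Lemma frob2 (R : comPzRingType) p (hp : prime p) (hc : p%:R = 0 :> R) (x y : R) :
  (x + y) ^+ p = x ^+ p + y ^+ p.
Proof.
case: p hp hc => [//|p] hp hc.
rewrite exprDn big_ord_recr big_ord_recl /= subnn subn0 expr0 mulr1 mul1r bin0 binn.
rewrite !mulr1n big1 ?add0r ?addr0 // => i _.
have /dvdnP [k ->] : (p.+1 %| 'C(p.+1, bump 0 i))%N.
  by apply: prime_dvd_bin => //; rewrite /bump /= add1n ltnS ltn_ord.
by rewrite mulrnA -mulr_natr hc mulr0.
Qed.

Lemma frob_sum (R : comPzRingType) p (hp : prime p) (hc : p%:R = 0 :> R)
  (I : finType) (F : I -> R) : (\sum_i F i) ^+ p = \sum_i F i ^+ p.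
Proof.
apply: (big_rec2 (fun a b => a ^+ p = b)); first by rewrite expr0n eqn0Ngt prime_gt0.
by move=> i y1 y2 _ <-; rewrite frob2.
Qed.

Section Mono.
Variables (A : comPzRingType) (n : nat).
Local Notation PS := (PS A n).

Lemma PS_mulrnE (x : PS) k r : (x *+ k) r = x r *+ k.
Proof. by elim: k => [|k IH] //; rewrite !mulrS PS_addE IH. Qed.

Lemma PS_sumE (I : finType) (F : I -> PS) r : (\sum_i F i) r = \sum_i F i r.
Proof.
by apply: (big_rec2 (fun (a : PS) b => a r = b)) => // i y1 y2 _ <-.
Qed.

Lemma PS_char p : p%:R = 0 :> A -> p%:R = 0 :> PS.
Proof.
move=> hc; apply: functional_extensionality => r.
by rewrite PS_mulrnE -mulr_natr hc mulr0.
Qed.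

Definition mono (c : A) (m : mindex n) : PS := fun r => if r == m then c else 0.

Lemma bnd_addl K (u t r : mindex n) : addm u t = r -> bnd K r -> bnd K u.
Proof. by rewrite addmC; apply: bnd_addr. Qed.

Lemma mono_mul c d s t : mono c s * mono d t = mono (c * d) (addm s t).
Proof.
apply: functional_extensionality => r; rewrite PS_mulE (cmulE' _ _ (bnd_mmax r)).
have hr := bnd_mmax r.
transitivity (\sum_(u : B n (mmax r)) (if toN u == s then
  \sum_(v : B n (mmax r)) (if toN v == t then
     (if addm s t == r then c * d else 0) else 0) else 0)).
  apply: eq_bigr => u _; rewrite /mono.
  case: (toN u =P s) => [->|_]; last by apply: big1 => v _; rewrite mul0r if_same.
  by apply: eq_bigr => v _; case: (toN v =P t) => [->|_]; rewrite ?mulr0 ?if_same.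
rewrite (@sum_delta _ _ _ s (fun=> \sum_(v : B n (mmax r)) (if toN v == t then
     (if addm s t == r then c * d else 0) else 0))).
  rewrite (@sum_delta _ _ _ t (fun=> if addm s t == r then c * d else 0)).
    by rewrite /mono eq_sym.
  by case: eqP => // e /negP []; apply: bnd_addr e hr.
move=> hs; apply: big1 => v _.
by case: (toN v =P t) => // _; case: (addm s t =P r) => // e; move: hs; rewrite (bnd_addl e hr).
Qed.

Definition scm (k : nat) (m : mindex n) : mindex n := [ffun i => (k * m i)%N].

Lemma mono_exp c s k : mono c s ^+ k = mono (c ^+ k) (scm k s).
Proof.
elim: k => [|k IH].
  rewrite expr0; apply: functional_extensionality => r.
  rewrite PS_oneE coneE /mono; congr (if _ then _ else _); congr (_ == _); apply/ffunP => i; rewrite !ffunE.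
rewrite exprS IH mono_mul -exprS; congr (mono _ _).
by apply/ffunP => i; rewrite !ffunE mulSn.
Qed.

Lemma finsupp_sum (f : coefs A n) N :
  (forall r : mindex n, (exists i, (N <= r i)%N) -> f r = 0) ->
  (f : PS) = \sum_(s : B n N) mono (f (toN s)) (toN s).
Proof.
move=> hN; apply: functional_extensionality => r; rewrite PS_sumE.
under eq_bigr => s _ do rewrite /mono eq_sym.
rewrite (@sum_delta _ _ _ r f) // => /forallPn [i hi]; apply: hN; exists i.
by rewrite ltnW // ltnNge.
Qed.

Lemma cpowE (f : coefs A n) k : cpow f k = (f : PS) ^+ k.
Proof. by elim: k => [|k IH] //; rewrite exprS -IH. Qed.

End Mono.

Section Psi.
Variables (A : comPzRingType) (n p' : nat) (a : 'I_n -> A).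
Hypothesis hp' : (0 < p')%N.
Hypothesis hchar : p'.+1%:R = 0 :> A.
Local Notation p := p'.+1.
Local Notation BB := (B n p').

Definition wgt (m : mindex n) : A := \prod_(i < n) (a i ^+ (p' - m i) * (m i)`!%:R).
Definition rt (q : mindex n) (t : BB) : mindex n := addm (scm p q) (toN t).
Definition psi q (h : coefs A n) : A := \sum_(t : BB) wgt (toN t) * h (rt q t).

Definition inc i (t : BB) : BB := [ffun j => if j == i then inord (t j).+1 else t j].
Definition dec i (t : BB) : BB := [ffun j => if j == i then inord (t j).-1 else t j].

Lemma toN_inc i (t : BB) j : (t i < p')%N ->
  toN (inc i t) j = if j == i then (t i).+1 else t j.
Proof.
move=> ht; rewrite !ffunE; case: eqP => [->|//].
by rewrite inordK.
Qed.

Lemma dec_inc i (t : BB) : (t i < p')%N -> dec i (inc i t) = t.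
Proof.
move=> ht; apply/ffunP => j; rewrite !ffunE; case: eqP => [->|//].
have e : (inord (t i).+1 : 'I_p'.+1) = (t i).+1 :> nat by rewrite inordK.
by apply: val_inj; rewrite /= e /= inordK.

Qed.

Lemma reindex_inc i (F : BB -> A) :
  \sum_(t : BB | (t i < p')%N) F (inc i t) = \sum_(t : BB | (0 < t i)%N) F t.
Proof.
rewrite (reindex_onto (dec i) (inc i)); last by move=> t; apply: dec_inc.
apply: eq_big => y.
  have hyi : (y i <= p')%N by rewrite -ltnS.
  case: (posnP (y i)) => hy.
    apply/negbTE; rewrite negb_and; apply/orP; right; apply/eqP => /ffunP /(_ i).
    rewrite !ffunE eqxx => /(congr1 (@nat_of_ord p)).
    have e0 : (inord (y i).-1 : 'I_p) = 0%N :> nat by rewrite hy inordK.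
    by rewrite e0 inordK ?hy // ltnS.
  have hd : (dec i y i < p')%N.
    rewrite ffunE eqxx inordK; first by rewrite -ltnS prednK.
    exact: leq_ltn_trans (leq_pred _) (ltn_ord _).
  rewrite hd /=; apply/eqP/ffunP => j; rewrite !ffunE; case: eqP => [->|//].
  have e1 : (inord (y i).-1 : 'I_p) = (y i).-1 :> nat.
    by rewrite inordK // (leq_ltn_trans (leq_pred _) (ltn_ord _)).
  by apply: ord_inj; rewrite e1 prednK // inordK.
move=> /andP [_ /eqP ->]; done.
Qed.


Lemma natr_p (k m : nat) : ((p * k + m)%N%:R : A) = m%:R.
Proof. by rewrite natrD natrM hchar mul0r add0r. Qed.

Lemma wgt_inc i (t : BB) : (t i < p')%N ->
  wgt (toN t) * (t i).+1%:R = a i * wgt (toN (inc i t)).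
Proof.
move=> ht; rewrite /wgt (bigD1 i) //= [in RHS](bigD1 i) //=.
rewrite (toN_inc _ ht) eqxx [in LHS]ffunE.
have -> : \prod_(j < n | j != i) (a j ^+ (p' - toN (inc i t) j) * (toN (inc i t) j)`!%:R)
        = \prod_(j < n | j != i) (a j ^+ (p' - toN t j) * (toN t j)`!%:R).
  by apply: eq_bigr => j hj; rewrite (toN_inc _ ht) (negbTE hj) ffunE.
rewrite -(subnSK ht) exprS factS natrM -!mulrA; congr (_ * (_ * _)).
by rewrite [RHS]mulrCA; congr (_ * _); rewrite mulrC.
Qed.

Lemma rt_inc i (t : BB) q : (t i < p')%N ->
  [ffun j => (rt q t j + (j == i))%N] = rt q (inc i t).
Proof.
move=> ht; apply/ffunP => j; rewrite !ffunE.
by case: eqP => [->|_]; rewrite ?addn0 // inordK // addn1 addnS.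
Qed.

Definition cL i (H : coefs A n) q : A := - \sum_(t : BB | toN t i == 0%N)
   (\prod_(j < n | j != i) (a j ^+ (p' - toN t j) * (toN t j)`!%:R)) * H (rt q t).

Lemma psi_L i H q :
  \sum_(t : BB) wgt (toN t) * (cderiv i H (rt q t) - a i * H (rt q t)) =
  cL i H q * a i ^+ p.
Proof.
have h1 : \sum_(t : BB) wgt (toN t) * cderiv i H (rt q t) =
    a i * \sum_(t : BB | (0 < t i)%N) wgt (toN t) * H (rt q t).
  rewrite (bigID (fun t : BB => (t i < p')%N)) /= [X in _ + X]big1 ?addr0; last first.
    move=> t ht; rewrite /cderiv.
    have -> : rt q t i = (p * q i + p')%N.
      by rewrite !ffunE; congr (_ + _)%N; apply/eqP; rewrite eqn_leq -ltnS ltn_ord leqNgt.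
    by rewrite -addnS natr_p hchar mul0r mulr0.
  rewrite -reindex_inc mulr_sumr; apply: eq_bigr => t ht.
  rewrite /cderiv rt_inc // mulrA.
  have -> : (rt q t i).+1%:R = (t i).+1%:R :> A.
    by rewrite !ffunE -addnS natr_p.
  by rewrite wgt_inc // mulrA.
have h2 : \sum_(t : BB) wgt (toN t) * (a i * H (rt q t)) =
    a i * \sum_(t : BB | (0 < t i)%N) wgt (toN t) * H (rt q t) +
    a i * \sum_(t : BB | toN t i == 0%N) wgt (toN t) * H (rt q t).
  rewrite (bigID (fun t : BB => (0 < t i)%N)) /= !mulr_sumr.
  congr (_ + _); first by apply: eq_bigr => t _; rewrite mulrCA.
  apply: eq_big => t; first by rewrite ffunE lt0n negbK.
  by move=> _; rewrite mulrCA.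
rewrite (eq_bigr (fun t : BB => wgt (toN t) * cderiv i H (rt q t) -
   wgt (toN t) * (a i * H (rt q t)))); last by move=> t _; rewrite mulrBr.
rewrite sumrB h1 h2 opprD addrA subrr add0r /cL mulNr; congr (- _).
rewrite mulr_sumr mulr_suml; apply: eq_bigr => t /eqP ht.
rewrite /wgt (bigD1 i) //= ht subn0 fact0 mulr1 exprS.
by rewrite [RHS]mulrC -!mulrA.
Qed.


Lemma psi_D (h : 'I_n -> coefs A n) q :
  psi q (Dmap a h) = \sum_i cL i (h i) q * a i ^+ p.
Proof.
rewrite /psi /Dmap; under eq_bigr => t _ do rewrite mulr_sumr.
by rewrite exchange_big; apply: eq_bigr => i _; apply: psi_L.
Qed.

Lemma addm0 (u : mindex n) : addm u (zm n) = u.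
Proof. by rewrite addmC add0m. Qed.

Lemma scm_eq (u v : mindex n) : (scm p u == scm p v) = (u == v).
Proof.
apply/eqP/eqP => [/ffunP h|->] //; apply/ffunP => i.
by have := h i; rewrite !ffunE => /eqP; rewrite eqn_pmul2l // => /eqP.
Qed.

Lemma coef_frob (f : coefs A n) N (hN : forall r : mindex n,
    (exists i, (N <= r i)%N) -> f r = 0) (hp : prime p) q (t : BB) :
  cpow f p (rt q t) = if toN t == zm n then f q ^+ p else 0.
Proof.
rewrite cpowE {1}(finsupp_sum hN) frob_sum //; last exact: PS_char.
rewrite PS_sumE; under eq_bigr => s _ do rewrite mono_exp.
case: (toN t =P zm n) => ht.
  rewrite /rt ht addm0; under eq_bigr => s _ do rewrite /mono scm_eq eq_sym.
  rewrite (@sum_delta _ _ _ q (fun m => f m ^+ p)) // => /forallPn [i hi].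
  by rewrite hN ?expr0n // ; exists i; rewrite ltnW // ltnNge.
apply: big1 => s _; rewrite /mono; case: eqP => // e; exfalso; apply: ht.
apply/ffunP => i; have := congr1 (fun m : mindex n => (m i %% p)%N) e.
rewrite /= !ffunE [(p * q i)%N]mulnC modnMDl modn_small ?ltn_ord //.
by rewrite [(p * _)%N]mulnC modnMl.
Qed.

Lemma psi_frob (f : coefs A n) N (hN : forall r : mindex n,
    (exists i, (N <= r i)%N) -> f r = 0) (hp : prime p) q :
  psi q (cpow f p) = (\prod_i a i ^+ p') * f q ^+ p.
Proof.
rewrite /psi (eq_bigr (fun t : BB => if toN t == zm n then wgt (toN t) * f q ^+ p else 0));
  last by move=> t _; rewrite (coef_frob hN hp q t); case: ifP; rewrite ?mulr0.
rewrite (@sum_delta _ _ _ (zm n) (fun m => wgt m * f q ^+ p)) ?bnd_zm //.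
congr (_ * _); apply: eq_bigr => i _.
by rewrite ffunE subn0 fact0 mulr1.
Qed.

End Psi.

Unset Implicit Arguments.

Theorem corollary2p6 (p : nat) (A : comPzRingType) (n : nat)
  (hp : prime p) (hchar : p%:R = 0 :> A)
  (a : 'I_n -> A) (hreg : regular_seq a)
  (f : coefs A n) (hf : finsupp f) :
  (exists h : 'I_n -> coefs A n,
      (forall i, finsupp (h i)) /\ cpow f p = Dmap a h) ->
  forall r : mindex n, in_ideal a (f r ^+ p).
Proof.
move=> [h [_ hD]] q.
case: p hp hchar hD => [//|p'] hp hchar hD.
have hp' : (0 < p')%N by case: p' hp {hchar hD}.
case: hf => N hN.
have e := @psi_frob A n p' a hchar f N hN hp q.
rewrite hD psi_D in e.
have hr := reg_of_regular hreg.
have := @colon A (@K0 A) (map a (enum 'I_n)) p' (@ideal_K0 A) hr (f q ^+ p'.+1).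
rewrite /in_ideal prefix_span // take_oversize ?size_map ?size_enum_ord //.
apply; rewrite -map_comp (span0P _ _ (enum_uniq _)).
exists (fun i => cL p' a i (h i) q).
- rewrite mulrC /Qp big_map big_enum /= -e big_enum.
  by apply: eq_bigl => i; rewrite inE.
- by rewrite -enumT size_enum_ord.
- exact: hp'.
- exact: hchar.
Qed.
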